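(* Under the model and assumptions (A1)–(A2) (with $\theta^\ast\in\Theta$ almost surely), define the confidence set $$\Theta_{1-\alpha}=\Big\{\theta\in\Theta:\ \max_{\psi\in\Psi}\mathrm{pval}(\theta,\psi)>\alpha\Big\}.$$ Then $\Pr(\theta^\ast\in\Theta_{1-\alpha})\ge 1-\alpha$ for every $\alpha\in(0,1)$.
   Context: Data $y_i=y^{\mathrm{p}}(t_i)+\varepsilon(t_i)$, $i=1,\dots,n$, with times $T^{(n)}$, data vector $Y^{(n)}$, error vector $\varepsilon^{(n)}$. (A1): $g\,\varepsilon^{(n)}\overset{d}{=}\varepsilon^{(n)}$ given $T^{(n)}$ for all $g\in\mathbb{D}^n$, the group of $n\times n$ diagonal $\pm1$ matrices. (A2): $y^{\mathrm{p}}(t)=y^{\mathrm{p}}(t;\theta^\ast,\psi^\ast)$ where $y^{\mathrm{p}}(t;\theta,\psi)=\psi_1+\psi_2\cos(2\pi t/\theta)+\psi_3\sin(2\pi t/\theta)$, $\theta^\ast\in\Theta$ (a finite subset of $\mathbb{R}^+$), $\psi^\ast\in\Psi\subseteq\mathbb{R}^3$ convex and compact. For $(\theta_0,\psi_0)\in\Theta\times\Psi$: loss $L(\theta,\psi)=\sum_i[y_i-y^{\mathrm{p}}(t_i;\theta,\psi)]^2/\sigma_i^2$ (known $\sigma_i^2>0$), $L_{0n}=\sum_i(y_i-\bar y)^2/\sigma_i^2$, $A_n(\theta\mid Y^{(n)},T^{(n)},\psi)=(L_{0n}-L(\theta,\psi))/L_{0n}$; statistic $s_n(Y^{(n)},T^{(n)})=\max_{\theta\in\Theta}A_n(\theta\mid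 Y^{(n)},T^{(n)},\psi_0)-A_n(\theta_0\mid Y^{(n)},T^{(n)},\psi_0)$, $s_{\mathrm{obs}}$ its observed value; $Y^{(n),\mathrm{p}}_0=(y^{\mathrm{p}}(t_i;\theta_0,\psi_0))_i$; for $G\sim\mathrm{Unif}(\mathbb{D}^n)$, $Y^{(n),G}=Y^{(n),\mathrm{p}}_0+G(Y^{(n)}-Y^{(n),\mathrm{p}}_0)$; $\mathrm{pval}(\theta_0,\psi_0)=\Pr_G\{s_n(Y^{(n),G},T^{(n)})\ge s_{\mathrm{obs}}\mid Y^{(n)},T^{(n)}\}$. *)

(* Defs.v *)
From HB Require Import structures.
From mathcomp Require Import all_boot all_order all_algebra.
From mathcomp Require Import all_classical all_reals all_analysis.
Set Implicit Arguments. Unset Strict Implicit. Unset Printing Implicit Defensive.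
Import Order.TTheory GRing.Theory Num.Theory.
Local Open Scope classical_set_scope.
Local Open Scope ring_scope.

Section Model.
Variable R : realType.

Definition psi1 (p : R * R * R) : R := p.1.1.
Definition psi2 (p : R * R * R) : R := p.1.2.
Definition psi3 (p : R * R * R) : R := p.2.

Definition yp (t theta : R) (p : R * R * R) : R :=
  psi1 p + psi2 p * cos (2 * pi * t / theta) + psi3 p * sin (2 * pi * t / theta).

Definition convex3 (S : set (R * R * R)) : Prop :=
  forall x y, S x -> S y -> forall l : R, 0 <= l <= 1 ->
    S (l * x.1.1 + (1 - l) * y.1.1, l * x.1.2 + (1 - l) * y.1.2,
       l * x.2 + (1 - l) * y.2).

Variable n : nat.

(* elements g of D^n (diagonal +-1 matrices) are encoded by their sign pattern:
   the i-th diagonal entry is (-1)^(g i) *)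
Definition sgnD (g : {ffun 'I_n -> bool}) (i : 'I_n) : R := (-1) ^+ g i.

Definition actD (g : {ffun 'I_n -> bool}) (v : n.-tuple R) : n.-tuple R :=
  [tuple sgnD g i * tnth v i | i < n].

Variable sigma2 : n.-tuple R.

Definition loss (Y T : n.-tuple R) (theta : R) (p : R * R * R) : R :=
  \sum_(i < n) (tnth Y i - yp (tnth T i) theta p) ^+ 2 / tnth sigma2 i.

Definition ybar (Y : n.-tuple R) : R := (\sum_(i < n) tnth Y i) / n%:R.

Definition loss0 (Y : n.-tuple R) : R :=
  \sum_(i < n) (tnth Y i - ybar Y) ^+ 2 / tnth sigma2 i.

Definition An (Y T : n.-tuple R) (theta : R) (p : R * R * R) : R :=
  (loss0 Y - loss Y T theta p) / loss0 Y.

(* s_n(Y, T) for the null (theta0, psi0); Theta is finite and contains theta0,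
   so the sup below is a maximum *)
Definition sn (Theta : set R) (theta0 : R) (psi0 : R * R * R)
  (Y T : n.-tuple R) : R :=
  sup [set An Y T th psi0 | th in Theta] - An Y T theta0 psi0.

Definition Yp0 (T : n.-tuple R) (theta0 : R) (psi0 : R * R * R) : n.-tuple R :=
  [tuple yp (tnth T i) theta0 psi0 | i < n].

Definition Yg (g : {ffun 'I_n -> bool}) (Y T : n.-tuple R) (theta0 : R)
  (psi0 : R * R * R) : n.-tuple R :=
  [tuple tnth (Yp0 T theta0 psi0) i +
         sgnD g i * (tnth Y i - tnth (Yp0 T theta0 psi0) i) | i < n].

Definition pval (Theta : set R) (Y T : n.-tuple R) (theta0 : R)
  (psi0 : R * R * R) : R :=
  (#|[set g : {ffun 'I_n -> bool} |
       sn Theta theta0 psi0 (Yg g Y T theta0 psi0) T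
       >= sn Theta theta0 psi0 Y T]|%:R) / (#|{ffun 'I_n -> bool}|%:R).

(* max_{psi in Psi} pval(theta, psi): pval takes finitely many values, so the
   sup is attained, i.e. it is a maximum *)
Definition maxpval (Theta : set R) (Psi : set (R * R * R)) (Y T : n.-tuple R)
  (theta : R) : R :=
  sup [set pval Theta Y T theta p | p in Psi].

Definition conf_set (Theta : set R) (Psi : set (R * R * R)) (alpha : R)
  (Y T : n.-tuple R) : set R :=
  [set theta | Theta theta /\ maxpval Theta Psi Y T theta > alpha].

End Model.

(* Main.v *)
Require Import Defs.
From HB Require Import structures.
From mathcomp Require Import all_boot all_order all_algebra.
From mathcomp Require Import all_classical all_reals all_analysis.
Import measurable_realfun.
Import Order.TTheory GRing.Theory Num.Theory numFieldNormedType.Exports.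
Local Open Scope classical_set_scope.
Local Open Scope ring_scope.

Lemma measurable_inv_R (R : realType) : measurable_fun [set: R] (@GRing.inv R).
Proof.
have -> : [set: R] = [set 0] `|` ~` [set 0] by rewrite setUv.
apply/measurable_funU => //; first exact: measurableC.
split; first exact: measurable_fun_set1.
apply: measurable_realfun.open_continuous_measurable_fun.
  by rewrite openC; exact: closed_eq.
move=> x; rewrite inE /= => /eqP x0; exact: inv_continuous.
Qed.

Section Meas.
Variables (R : realType) (n : nat) (sigma2 : n.-tuple R) (Theta : set R)
  (th0 : R) (p0 : R * R * R).
Variables (d : measure_display) (X : measurableType d).
Implicit Types (f g : X -> R) (F G : X -> n.-tuple R).

Lemma mcos f : measurable_fun setT f -> measurable_fun setT (fun x => cos (f x)).
Proof.
move=> mf; apply: (measurableT_comp (f := @cos R)) => //.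
exact: measurable_realfun.continuous_measurable_fun (@continuous_cos R).
Qed.

Lemma msin f : measurable_fun setT f -> measurable_fun setT (fun x => sin (f x)).
Proof.
move=> mf; apply: (measurableT_comp (f := @sin R)) => //.
exact: measurable_realfun.continuous_measurable_fun (@continuous_sin R).
Qed.

Lemma minv f : measurable_fun setT f -> measurable_fun setT (fun x => (f x)^-1).
Proof.
move=> mf; apply: (measurableT_comp (f := @GRing.inv R)) => //.
exact: measurable_inv_R.
Qed.

Lemma myp th p f : measurable_fun setT f ->
  measurable_fun setT (fun x => yp (f x) th p).
Proof.
move=> mf; rewrite /yp.
apply: measurable_funD; first apply: measurable_funD.
- exact: measurable_cst.
- apply: measurable_funM; first exact: measurable_cst.
  apply: mcos; apply: measurable_funM; last exact: measurable_cst.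
  by apply: measurable_funM => //; exact: measurable_cst.
- apply: measurable_funM; first exact: measurable_cst.
  apply: msin; apply: measurable_funM; last exact: measurable_cst.
  by apply: measurable_funM => //; exact: measurable_cst.
Qed.

Lemma mtnth F i : measurable_fun setT F -> measurable_fun setT (fun x => tnth (F x) i).
Proof. by move=> mF; apply: (measurableT_comp (measurable_tnth i)). Qed.

Lemma mtuple F : (forall i, measurable_fun setT (fun x => tnth (F x) i)) ->
  measurable_fun setT F.
Proof. by move=> h; apply/measurable_fun_tnthP => i; exact: h. Qed.

Lemma mloss F G th p : measurable_fun setT F -> measurable_fun setT G ->
  measurable_fun setT (fun x => loss sigma2 (F x) (G x) th p).
Proof.
move=> mF mG; rewrite /loss; apply: measurable_sum => i.
apply: measurable_funM; last exact: measurable_cst.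
apply: measurable_funX; apply: measurable_funB; first exact: mtnth.
by apply: myp; exact: mtnth.
Qed.

Lemma mloss0 F : measurable_fun setT F ->
  measurable_fun setT (fun x => loss0 sigma2 (F x)).
Proof.
move=> mF; rewrite /loss0; apply: measurable_sum => i.
apply: measurable_funM; last exact: measurable_cst.
apply: measurable_funX; apply: measurable_funB; first exact: mtnth.
rewrite /ybar; apply: measurable_funM; last exact: measurable_cst.
by apply: measurable_sum => j; exact: mtnth.
Qed.

Lemma mAn F G th p : measurable_fun setT F -> measurable_fun setT G ->
  measurable_fun setT (fun x => An sigma2 (F x) (G x) th p).
Proof.
move=> mF mG; rewrite /An; apply: measurable_funM.
  by apply: measurable_funB; [exact: mloss0|exact: mloss].
by apply: minv; exact: mloss0.
Qed.

End Meas.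
Section Sup.
Variable R : realType.

Lemma fold_props (f : R -> R) (a : R) (s : seq R) :
  (foldr (fun th acc => Num.max (f th) acc) (f a) s = f a \/
   exists2 th, th \in s & foldr (fun th acc => Num.max (f th) acc) (f a) s = f th) /\
  f a <= foldr (fun th acc => Num.max (f th) acc) (f a) s /\
  (forall th, th \in s -> f th <= foldr (fun th acc => Num.max (f th) acc) (f a) s).
Proof.
elim: s => [|b s IH] /=; first by split; [left|split].
case: IH => IH1 [IH2 IH3]; set m := foldr _ _ s in IH1 IH2 IH3 *.
split; last split.
- have [h|h] := leP (f b) m.
  + case: IH1 => [->|[th ths ->]]; first by left.
    by right; exists th => //; rewrite inE ths orbT.
  + right; exists b => //; exact: mem_head.
- by rewrite le_max IH2 orbT.
- move=> th; rewrite inE => /orP [/eqP ->|ths]; first by rewrite le_max lexx.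
  by rewrite le_max IH3 ?orbT.
Qed.

Lemma sup_fold (f : R -> R) (a : R) (s : seq R) (Th : set R) :
  Th = [set` s] -> Th a ->
  sup [set f th | th in Th] = foldr (fun th acc => Num.max (f th) acc) (f a) s.
Proof.
move=> -> sa; have [P1 [P2 P3]] := fold_props f a s.
set m := foldr _ _ s in P1 P2 P3 *.
have ub : ubound [set f th | th in [set` s]] m.
  by move=> _ [th ths <-]; exact: P3.
apply/le_anti/andP; split; first by apply: ge_sup => //; exists (f a), a.
apply: ub_le_sup; first by exists m.
case: P1 => [->|[th ths ->]]; first by exists a.
by exists th.
Qed.
End Sup.

Section Count.
Variable R : realType.

Lemma sumb_card (I : finType) (P : pred I) :
  \sum_(i : I) (P i)%:R = (#|[set i | P i]|)%:R :> R.
Proof.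
rewrite -sum1_card natr_sum [RHS]big_mkcond /=; apply: eq_bigr => i _.
case: ifPn => [/set_mem /= -> //|]; case: (boolP (P i)) => // Pi /negP[].
exact: mem_set.
Qed.

Lemma count_lemma (I : finType) (x : I -> R) (k : R) : 0 <= k ->
  \sum_(h : I) (((\sum_(g : I) (x h <= x g)%R%:R) <= k)%R)%:R <= k.
Proof.
move=> k0.
set Q := fun h => ((\sum_(g : I) (x h <= x g)%R%:R) <= k)%R.
case: (pickP Q) => [h1 Qh1|none]; last by rewrite big1 // => h _; move: (none h); rewrite /Q => ->.
case: (arg_minP x Qh1) => h0 Qh0 minh0.
apply: le_trans Qh0; apply: ler_sum => h _.
have := minh0 h; rewrite /Q.
case: (_ <= k)%R => [->//|_]; by case: (x h0 <= x h)%R.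
Qed.
End Count.

Section Main.
Variables (R : realType) (n : nat) (sigma2 : n.-tuple R) (Theta : set R)
  (th0 : R) (p0 : R * R * R).

Definition Yf (t e : n.-tuple R) : n.-tuple R :=
  [tuple yp (tnth t i) th0 p0 + tnth e i | i < n].

Definition Sx (x : n.-tuple R * n.-tuple R) : R :=
  sn sigma2 Theta th0 p0 (Yf x.1 x.2) x.1.

Definition xorf (g h : {ffun 'I_n -> bool}) : {ffun 'I_n -> bool} :=
  [ffun i => g i (+) h i].

Definition cnt (x : n.-tuple R * n.-tuple R) : R :=
  \sum_(g : {ffun 'I_n -> bool}) (Sx x <= Sx (x.1, actD g x.2))%R%:R.

Lemma xorfK h : cancel (xorf ^~ h) (xorf ^~ h).
Proof. by move=> g; apply/ffunP => i; rewrite !ffunE addbK. Qed.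

Lemma actD_comp g h (e : n.-tuple R) : actD g (actD h e) = actD (xorf g h) e.
Proof.
apply: eq_from_tnth => i; rewrite !tnth_map !tnth_ord_tuple /sgnD ffunE.
by rewrite signr_addb mulrA.
Qed.

Lemma Yg_eq g (t e : n.-tuple R) : Yg g (Yf t e) t th0 p0 = Yf t (actD g e).
Proof.
apply: eq_from_tnth => i; rewrite !tnth_map !tnth_ord_tuple.
by rewrite [_ + tnth e i]addrC addrK.
Qed.

Lemma cnt_act (t e : n.-tuple R) h :
  cnt (t, actD h e) = \sum_(g : {ffun 'I_n -> bool})
     (Sx (t, actD h e) <= Sx (t, actD g e))%R%:R.
Proof.
rewrite /cnt /= (reindex_inj (can_inj (xorfK h))) /=.
by apply: eq_bigr => g _; rewrite actD_comp xorfK.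
Qed.

Lemma mact (g : {ffun 'I_n -> bool}) : measurable_fun setT (@actD R n g).
Proof.
apply: mtuple => i.
rewrite (_ : (fun x => tnth (actD g x) i) = fun x => sgnD R g i * tnth x i).
  by apply: measurable_funM; [exact: measurable_cst|exact: mtnth].
by apply/funext => x; rewrite tnth_map tnth_ord_tuple.
Qed.

Lemma mfold (d : measure_display) (X : measurableType d) (F G : X -> n.-tuple R)
  (s : seq R) : measurable_fun setT F -> measurable_fun setT G ->
  measurable_fun setT (fun x => foldr (fun th acc =>
     Num.max (An sigma2 (F x) (G x) th p0) acc) (An sigma2 (F x) (G x) th0 p0) s).
Proof.
move=> mF mG; elim: s => [|b s IH] /=; first exact: mAn.
by apply: measurable_maxr => //; exact: mAn.
Qed.

Lemma mSx (s : seq R) : Theta = [set` s] -> Theta th0 ->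
  measurable_fun setT Sx.
Proof.
move=> Hs Ht.
have mY : measurable_fun setT (fun x : n.-tuple R * n.-tuple R => Yf x.1 x.2).
  apply: mtuple => i.
  rewrite (_ : (fun x => _) = fun x : n.-tuple R * n.-tuple R =>
     yp (tnth x.1 i) th0 p0 + tnth x.2 i).
    apply: measurable_funD; first apply: myp.
      exact: (measurableT_comp (measurable_tnth i) measurable_fst).
    exact: (measurableT_comp (measurable_tnth i) measurable_snd).
  by apply/funext => x; rewrite tnth_map tnth_ord_tuple.
rewrite (_ : Sx = fun x => foldr (fun th acc =>
     Num.max (An sigma2 (Yf x.1 x.2) x.1 th p0) acc)
        (An sigma2 (Yf x.1 x.2) x.1 th0 p0) s - An sigma2 (Yf x.1 x.2) x.1 th0 p0).
  apply: measurable_funB; first exact: mfold.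
  exact: mAn.
by apply/funext => x; rewrite /Sx /sn (sup_fold _ _ _ _ _ Hs Ht).
Qed.

Lemma mpairact (g : {ffun 'I_n -> bool}) :
  measurable_fun setT (fun x : n.-tuple R * n.-tuple R => (x.1, actD g x.2)).
Proof.
apply: measurable_fun_pair => //.
exact: (measurableT_comp (mact g) measurable_snd).
Qed.

Lemma mcnt (s : seq R) : Theta = [set` s] -> Theta th0 ->
  measurable_fun setT cnt.
Proof.
move=> Hs Ht; rewrite /cnt; apply: measurable_sum => g.
apply: (measurableT_comp (f := fun b : bool => (b : nat)%:R : R)) => //.
apply: measurable_fun_ler; first exact: mSx Hs Ht.
have mS := @mSx s Hs Ht.
have mP := mpairact g.
have h := measurableT_comp mS mP.
exact: h.
Qed.

End Main.
Arguments cnt {R n}. Arguments Sx {R n}. Arguments mact {R n}.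
Arguments mcnt {R n}. Arguments cnt_act {R n}. Arguments Yg_eq {R n}.
Arguments count_lemma {R I}. Arguments Yf {R n}.
Theorem theorem2 (R : realType) (d : measure_display) (Omega : measurableType d)
  (P : probability Omega R) (n : nat)
  (sigma2 : n.-tuple R) (Theta : set R) (Psi : set (R * R * R))
  (theta_star : R) (psi_star : R * R * R)
  (Tn eps : Omega -> n.-tuple R) :
  (forall i, 0 < tnth sigma2 i) ->
  finite_set Theta -> Theta `<=` [set x | 0 < x] ->
  convex3 Psi -> compact Psi ->
  (* (A2) *)
  Theta theta_star -> Psi psi_star ->
  (* times and errors are random vectors *)
  measurable_fun setT Tn -> measurable_fun setT eps ->
  (* (A1): g eps =d eps conditionally on T, i.e. (T, g eps) =d (T, eps) *)
  (forall g : {ffun 'I_n -> bool}, forall A : set (n.-tuple R * n.-tuple R),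
      measurable A ->
      P ((fun w => (Tn w, actD g (eps w))) @^-1` A) =
      P ((fun w => (Tn w, eps w)) @^-1` A)) ->
  forall alpha : R, 0 < alpha < 1 ->
  let Y := fun w => [tuple yp (tnth (Tn w) i) theta_star psi_star
                           + tnth (eps w) i | i < n] in
  (* Pr(theta* in Theta_{1-alpha}) >= 1 - alpha, as an inner probability *)
  exists E : set Omega, measurable E /\
    E `<=` [set w | conf_set sigma2 Theta Psi alpha (Y w) (Tn w) theta_star] /\
    ((1 - alpha)%:E <= P E)%E.
Proof.
move=> s0 finT Tpos _ _ Tth Pps mT meps A1 alpha /andP[a0 a1] Y.
have [s Hs] := (finite_seqP Theta).1 finT.
set N : R := (#|{ffun 'I_n -> bool}|)%:R.
have N0 : 0 < N.
  by rewrite ltr0n; apply/card_gt0P; exists [ffun => false].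
pose cn := cnt sigma2 Theta theta_star psi_star.
pose B : set (n.-tuple R * n.-tuple R) := [set x | cn x <= alpha * N].
have mcn : measurable_fun setT cn by exact: (@mcnt _ _ _ _ _ _ s Hs Tth).
have mB : measurable B.
  have := mcn measurableT _ (measurable_itv `]-oo, (alpha * N)]).
  rewrite setTI; congr measurable; apply/seteqP; split => x /=;
    by rewrite in_itv /=.
pose Z := fun w => (Tn w, eps w).
have mZ : measurable_fun setT Z by exact: measurable_fun_pair.
pose Zh h := fun w => (Tn w, actD h (eps w)).
have mZh : forall h, measurable_fun setT (Zh h).
  move=> h; apply: measurable_fun_pair => //.
  exact: (measurableT_comp (mact h) meps).
pose C h := Zh h @^-1` B.
have mC : forall h, measurable (C h).
  by move=> h; rewrite -[C h]setTI; exact: mZh.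
have mZB : measurable (Z @^-1` B) by rewrite -[_ @^-1` _]setTI; exact: mZ.
have ptw : forall w, \sum_(h : {ffun 'I_n -> bool}) (\1_(C h) w : R) <= alpha * N.
  move=> w.
  have -> : \sum_(h : {ffun 'I_n -> bool}) (\1_(C h) w : R) =
     \sum_(h : {ffun 'I_n -> bool})
       ((\sum_(g : {ffun 'I_n -> bool})
          (Sx sigma2 Theta theta_star psi_star (Tn w, actD h (eps w)) <=
           Sx sigma2 Theta theta_star psi_star (Tn w, actD g (eps w)))%R%:R)
        <= alpha * N)%R%:R.
    apply: eq_bigr => h _; rewrite indicE -cnt_act.
    case: (boolP (cnt sigma2 Theta theta_star psi_star (Tn w, actD h (eps w))
                    <= alpha * N)) => H.
      by rewrite mem_set.
    by rewrite memNset //= => H'; move/negP: H; apply.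
  apply: count_lemma.
  by rewrite mulr_ge0 // ltW.
have key : (\sum_(h : {ffun 'I_n -> bool}) P (C h) <= (alpha * N)%:E)%E.
  rewrite (eq_bigr (fun h => \int[P]_w (\1_(C h) w)%:E)%E); last first.
    by move=> h _; rewrite integral_indic // setIT.
  rewrite -ge0_integral_sum //;
    try (by move=> h; apply/measurable_EFinP; exact: measurable_indic);
    try (by move=> h w _; rewrite lee_fin).
  apply: (@le_trans _ _ (\int[P]_w (alpha * N)%:E)%E).
    apply: ge0_le_integral => //.
    - by move=> w _; apply: sume_ge0 => h _; rewrite lee_fin.
    - apply: emeasurable_sum => h.
      by apply/measurable_EFinP; exact: measurable_indic.
    - by move=> w _; rewrite sumEFin lee_fin ptw.
  rewrite integral_cst //.
  rewrite -[leRHS]mule1; apply: lee_wpmul2l.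
    by rewrite lee_fin mulr_ge0 // ltW.
  exact: probability_le1.
have finZ : P (Z @^-1` B) \is a fin_num by rewrite fin_num_measure.
set r := fine (P (Z @^-1` B)).
have Pr : P (Z @^-1` B) = r%:E by rewrite fineK.
have rle : r <= alpha.
  move: key; rewrite (eq_bigr (fun _ => r%:E)); last first.
    by move=> h _; rewrite /C A1 // Pr.
  rewrite sumEFin lee_fin sumr_const -mulr_natr.
  by rewrite ler_pM2r.
exists (Z @^-1` (~` B)); split; first by rewrite -[_ @^-1` _]setTI; apply: mZ => //; exact: measurableC.
split; last first.
  rewrite preimage_setC probability_setC // Pr -EFinB lee_fin.
  by rewrite lerB.
move=> w /= nB; split => //.
have pv1 : forall Y' T' th p, pval sigma2 Theta Y' T' th p <= 1.
  move=> Y' T' th p; rewrite /pval ler_pdivrMr // mul1r ler_nat.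
  exact: max_card.
have pv : pval sigma2 Theta (Y w) (Tn w) theta_star psi_star = cn (Z w) / N.
  have -> : Y w = Yf theta_star psi_star (Tn w) (eps w) by [].
  rewrite /pval /cn /cnt sumb_card; congr ((#|_|)%:R / _).
  by apply/seteqP; split => g /=; rewrite Yg_eq.
apply: (@lt_le_trans _ _ (pval sigma2 Theta (Y w) (Tn w) theta_star psi_star)).
  rewrite pv ltr_pdivlMr // ltNge; apply/negP => H; apply: nB; exact: H.
apply: ub_le_sup; last by exists psi_star.
by exists 1 => _ [p _ <-].
Qed.
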